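(* Let $(p^*,q^*,\omega^*,\tilde\theta^*,\alpha^*,\lambda^*,\eta^*,\nu^* )$ be an optimal primal-dual solution of the planner's problem \[ \min_{p,q,\omega\in\mathbb{R}^n,\ \tilde\theta\in\mathbb{R}^{|\mathcal E|}}\ \sum_{j=1}^n J_j(p_j)+\tfrac12\omega^TD\omega \] subject to $q=p$ (multiplier $\alpha\in\mathbb{R}^n$), $\mathbf 1^T(q-d)=0$ (multiplier $\lambda\in\mathbb{R}$), $H^T(q-d)\le F$ (multiplier $\eta\in\mathbb{R}^{2|\mathcal E|}_{\ge0}$), and $q-d-D\omega-CB\tilde\theta=0$ (multiplier $\nu\in\mathbb{R}^n$). Then $q^*-d-D\omega^*-CB\tilde\theta^*=0$, $\omega^*=0$, $q^*$ is an optimal solution of $\min_q \sum_j J_j(q_j)$ s.t. $\mathbf 1^T(q-d)=0$, $H^T(q-d)\le F$, and $\nabla J(p^* )=\lambda^*\mathbf 1-H\eta^*$, where $\nabla J(p):=(J_j'(p_j))_{j=1}^n$.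
   Context: $(\mathcal N,\mathcal E)$ is a connected directed graph with $\mathcal N=\{1,\dots,n\}$; $C\in\mathbb{R}^{n\times|\mathcal E|}$ is its incidence matrix ($C_{j,e}=1$ if $e=(j,k)$, $-1$ if $e=(k,j)$, $0$ otherwise). $B$ ($|\mathcal E|\times|\mathcal E|$) and $D$ ($n\times n$) are diagonal with positive diagonal entries. $L:=CBC^T$, $L^\dagger$ its Moore–Penrose inverse, $H\in\mathbb{R}^{n\times2|\mathcal E|}$ with $H^T=\begin{bmatrix} BC^TL^\dagger\\ -BC^TL^\dagger\end{bmatrix}$, $F=\begin{bmatrix}\overline F\\-\underline F\end{bmatrix}$ for given limits $\underline F,\overline F$. $d\in\mathbb{R}^n$ is given; each $J_j$ is strictly convex and twice differentiable. The Lagrangian used to define the multipliers is $\sum_jJ_j(p_j)+\tfrac12\omega^TD\omega+\nu^T(q-d-D\omega-CB\tilde\theta)+\alpha^T(q-p)-\lambda\mathbf 1^T(q-d)+\eta^T(H^T(q-d)-F)$. *)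

(* Defs.v *)
From HB Require Import structures.
From mathcomp Require Import all_boot all_order all_algebra.
From mathcomp Require Import all_classical all_reals all_analysis.
Set Implicit Arguments. Unset Strict Implicit. Unset Printing Implicit Defensive.
Import Order.TTheory GRing.Theory Num.Theory.
Local Open Scope ring_scope.

Definition incidence (R : pzRingType) (n m : nat) (src tgt : 'I_m -> 'I_n)
  : 'M[R]_(n, m) :=
  \matrix_(j, e) (if src e == j then 1 else if tgt e == j then -1 else 0).

Definition weakly_connected (n m : nat) (src tgt : 'I_m -> 'I_n) : Prop :=
  forall i j : 'I_n,
    connect (fun a b => [exists e, ((src e == a) && (tgt e == b))
                                || ((src e == b) && (tgt e == a))]) i j.

Definition is_MP_inverse (R : pzRingType) (k : nat) (A X : 'M[R]_k) : Prop :=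
  [/\ A *m X *m A = A, X *m A *m X = X,
      (A *m X)^T = A *m X & (X *m A)^T = X *m A].

Definition strictly_convex (R : realType) (f : R -> R) : Prop :=
  forall x y t : R, x != y -> 0 < t < 1 ->
    f (t * x + (1 - t) * y) < t * f x + (1 - t) * f y.

Definition vle (R : realType) (k : nat) (u v : 'cV[R]_k) : Prop :=
  forall i, u i 0 <= v i 0.

Definition diagm (R : pzRingType) (k : nat) (b : 'I_k -> R) : 'M[R]_k :=
  diag_mx (\row_i b i).

Section Problem.
Variables (R : realType) (n m : nat).
Variables (J : 'I_n -> R -> R) (C : 'M[R]_(n, m)) (B : 'M[R]_m) (D : 'M[R]_n)
  (H : 'M[R]_(n, m + m)) (F : 'cV[R]_(m + m)) (d : 'cV[R]_n).

Definition ones : 'cV[R]_n := const_mx 1.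

Definition sumJ (p : 'cV[R]_n) : R := \sum_j J j (p j 0).

Definition planner_obj (p omega : 'cV[R]_n) : R :=
  sumJ p + 2^-1 * (omega^T *m D *m omega) 0 0.

Definition lagrangian (p q omega : 'cV[R]_n) (theta : 'cV[R]_m)
  (alpha : 'cV[R]_n) (lam : R) (eta : 'cV[R]_(m + m)) (nu : 'cV[R]_n) : R :=
  planner_obj p omega
  + (nu^T *m (q - d - D *m omega - C *m B *m theta)) 0 0
  + (alpha^T *m (q - p)) 0 0
  - lam * (ones^T *m (q - d)) 0 0
  + (eta^T *m (H^T *m (q - d) - F)) 0 0.

(* Optimal primal-dual solution = saddle point of the Lagrangian
   with eta >= 0 (zero duality gap, primal and dual optimal). *)
Definition primal_dual_optimal (p q omega : 'cV[R]_n) (theta : 'cV[R]_m)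
  (alpha : 'cV[R]_n) (lam : R) (eta : 'cV[R]_(m + m)) (nu : 'cV[R]_n) : Prop :=
  [/\ vle 0 eta,
      (forall alpha' lam' eta' nu', vle 0 eta' ->
         lagrangian p q omega theta alpha' lam' eta' nu'
         <= lagrangian p q omega theta alpha lam eta nu)
    & (forall p' q' omega' theta',
         lagrangian p q omega theta alpha lam eta nu
         <= lagrangian p' q' omega' theta' alpha lam eta nu)].

Definition reduced_feasible (q : 'cV[R]_n) : Prop :=
  (ones^T *m (q - d)) 0 0 = 0 /\ vle (H^T *m (q - d)) F.

Definition reduced_optimal (q : 'cV[R]_n) : Prop :=
  reduced_feasible q /\ forall q', reduced_feasible q' -> sumJ q <= sumJ q'.

End Problem.

(* Main.v *)
Require Import Defs.
From HB Require Import structures.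
From mathcomp Require Import all_boot all_order all_algebra.
From mathcomp Require Import all_classical all_reals all_analysis.
From mathcomp Require Import ring lra.
Import Order.TTheory GRing.Theory Num.Theory.
Local Open Scope ring_scope.

Set Implicit Arguments. Unset Strict Implicit.
Local Open Scope ring_scope.

Section Dot.
Variable R : realType.
Definition dot {k} (u v : 'cV[R]_k) : R := (u^T *m v) 0 0.
Lemma dotE k (u v : 'cV[R]_k) : dot u v = \sum_i u i 0 * v i 0.
Proof. by rewrite /dot mxE; apply: eq_bigr => i _; rewrite mxE. Qed.
Lemma dotDl k (u w v : 'cV[R]_k) : dot (u + w) v = dot u v + dot w v.
Proof. by rewrite !dotE -big_split; apply: eq_bigr => i _; rewrite mxE mulrDl. Qed.
Lemma dotDr k (u w v : 'cV[R]_k) : dot v (u + w) = dot v u + dot v w.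
Proof. by rewrite !dotE -big_split; apply: eq_bigr => i _; rewrite mxE mulrDr. Qed.
Lemma dotNl k (u v : 'cV[R]_k) : dot (- u) v = - dot u v.
Proof. by rewrite !dotE -sumrN; apply: eq_bigr => i _; rewrite mxE mulNr. Qed.
Lemma dotNr k (u v : 'cV[R]_k) : dot v (- u) = - dot v u.
Proof. by rewrite !dotE -sumrN; apply: eq_bigr => i _; rewrite mxE mulrN. Qed.
Lemma dotBl k (u w v : 'cV[R]_k) : dot (u - w) v = dot u v - dot w v.
Proof. by rewrite dotDl dotNl. Qed.
Lemma dotBr k (u w v : 'cV[R]_k) : dot v (u - w) = dot v u - dot v w.
Proof. by rewrite dotDr dotNr. Qed.
Lemma dotZl k a (u v : 'cV[R]_k) : dot (a *: u) v = a * dot u v.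
Proof. by rewrite !dotE mulr_sumr; apply: eq_bigr => i _; rewrite mxE mulrA. Qed.
Lemma dotZr k a (u v : 'cV[R]_k) : dot v (a *: u) = a * dot v u.
Proof. by rewrite !dotE mulr_sumr; apply: eq_bigr => i _; rewrite mxE mulrCA. Qed.
Lemma dotC k (u v : 'cV[R]_k) : dot u v = dot v u.
Proof. by rewrite !dotE; apply: eq_bigr => i _; rewrite mulrC. Qed.
Lemma dot0l k (v : 'cV[R]_k) : dot 0 v = 0.
Proof. by rewrite dotE big1 // => i _; rewrite mxE mul0r. Qed.
Lemma dot0r k (v : 'cV[R]_k) : dot v 0 = 0.
Proof. by rewrite dotC dot0l. Qed.
Lemma dotM k l (u : 'cV[R]_k) (A : 'M[R]_(k, l)) v : dot u (A *m v) = dot (A^T *m u) v.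
Proof. by rewrite /dot trmx_mul trmxK mulmxA. Qed.
Lemma dot_ge0 k (u : 'cV[R]_k) : 0 <= dot u u.
Proof. by rewrite dotE sumr_ge0 // => i _; rewrite -expr2 sqr_ge0. Qed.
Lemma dot_eq0 k (u : 'cV[R]_k) : dot u u <= 0 -> u = 0.
Proof.
move=> h; have h0 : dot u u = 0 by apply/eqP; rewrite eq_le h dot_ge0.
move: h0; rewrite dotE => /psumr_eq0P h1.
apply/matrixP => i j; rewrite ord1 mxE; apply/eqP; rewrite -sqrf_eq0 expr2.
by apply/eqP; apply: h1 => // l _; rewrite -expr2 sqr_ge0.
Qed.
Lemma dot_delta k (i : 'I_k) (v : 'cV[R]_k) : dot (delta_mx i 0) v = v i 0.
Proof.
rewrite dotE (bigD1 i) //= big1 ?addr0; first by rewrite mxE !eqxx mul1r.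
by move=> l /negPf hl; rewrite mxE hl mul0r.
Qed.
End Dot.
Arguments dot {R k}.

Lemma impl (P Q : Prop) : P -> (P -> Q) -> Q. Proof. by auto. Qed.

Lemma fermat1 (R : realType) (f : R -> R) (a c : R) :
  (forall x, derivable f x 1) ->
  (forall y, f c - a * c <= f y - a * y) -> derive1 f c = a.
Proof.
move=> df hmin.
pose g : R -> R := f - a \*: id.
have dg : forall x, derivable g x 1.
  by move=> x; apply: derivableB => //; apply: derivableZ; exact: derivable_id.
have hm : is_derive c 1 g 0.
  apply: (@derive1_at_min R g (c - 1) (c + 1) c).
  - lra.
  - by move=> t _; exact: dg.
  - by rewrite in_itv /=; apply/andP; split; lra.
  - by move=> t _; rewrite /g /=; exact: hmin.
have h0 : derive g c 1 = 0 by rewrite derive_val.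
move: h0; rewrite /g deriveB; last 2 first.
- exact: df.
- by apply: derivableZ; exact: derivable_id.
rewrite deriveZ; last exact: derivable_id.
rewrite derive_id derive1E => h; apply/eqP; rewrite -subr_eq0; apply/eqP.
by rewrite -h; congr (_ - _); exact: (esym (mulr1 a)).
Qed.

Lemma inc_col (R : realType) n m (src tgt : 'I_m -> 'I_n) (v : 'cV[R]_n) e :
  src e != tgt e ->
  ((incidence R src tgt)^T *m v) e 0 = v (src e) 0 - v (tgt e) 0.
Proof.
move=> hst; rewrite mxE (bigD1 (src e)) //= (bigD1 (tgt e)) /=; last by rewrite eq_sym.
rewrite big1 ?addr0.
  by rewrite !mxE eqxx (negPf hst) eqxx mul1r mulN1r.
move=> i /andP[hi1 hi2]; rewrite !mxE eq_sym (negPf hi1) eq_sym (negPf hi2).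
by rewrite mul0r.
Qed.

Lemma sumJ_delta (R : realType) n (J : 'I_n -> R -> R) (p : 'cV[R]_n) j c :
  sumJ J (p + c *: delta_mx j 0) = sumJ J p - J j (p j 0) + J j (p j 0 + c).
Proof.
rewrite /sumJ (bigD1 j) //= [in RHS](bigD1 j) //=.
rewrite !mxE !eqxx mulr1.
have -> : \sum_(i < n | i != j) J i ((p + c *: delta_mx j 0) i 0)
        = \sum_(i < n | i != j) J i (p i 0).
  by apply: eq_bigr => i /negPf hi; rewrite !mxE hi mulr0 addr0.
lra.
Qed.

Lemma diag_quad (R : realType) n (dD : 'I_n -> R) (u : 'cV[R]_n) :
  dot u (diagm dD *m u) = \sum_i dD i * u i 0 ^+ 2.
Proof.
rewrite dotE; apply: eq_bigr => i _.
by rewrite /diagm mul_diag_mx !mxE expr2; ring.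
Qed.

Lemma diag_quad_eq0 (R : realType) n (dD : 'I_n -> R) (u : 'cV[R]_n) :
  (forall i, 0 < dD i) -> dot u (diagm dD *m u) <= 0 -> u = 0.
Proof.
move=> hd; rewrite diag_quad => h.
have h0 : \sum_i dD i * u i 0 ^+ 2 = 0.
  apply/eqP; rewrite eq_le h sumr_ge0 // => i _.
  by apply: mulr_ge0; [exact: ltW | exact: sqr_ge0].
apply/matrixP => i j; rewrite ord1 mxE; apply/eqP.
have hpos : forall l : 'I_n, true -> 0 <= dD l * u l 0 ^+ 2.
  by move=> l _; apply: mulr_ge0; [exact: ltW | exact: sqr_ge0].
have /eqP := (psumr_eq0P hpos h0) i isT.
by rewrite mulf_eq0 (gt_eqF (hd i)) /= sqrf_eq0.
Qed.

Lemma diag_sym (R : realType) n (dD : 'I_n -> R) (u v : 'cV[R]_n) :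
  dot u (diagm dD *m v) = dot v (diagm dD *m u).
Proof. by rewrite dotM /diagm tr_diag_mx dotC. Qed.

Unset Implicit Arguments. Set Strict Implicit.

Theorem corollary1 (R : realType) (n m : nat) (src tgt : 'I_m -> 'I_n)
  (b : 'I_m -> R) (dD : 'I_n -> R) (J : 'I_n -> R -> R) (Ldag : 'M[R]_n)
  (Fup Flo : 'cV[R]_m) (d : 'cV[R]_n)
  (p q omega : 'cV[R]_n) (theta : 'cV[R]_m) (alpha : 'cV[R]_n) (lam : R)
  (eta : 'cV[R]_(m + m)) (nu : 'cV[R]_n) :
  (forall e, src e != tgt e) ->
  injective (fun e => (src e, tgt e)) ->
  weakly_connected src tgt ->
  (forall e, 0 < b e) ->
  (forall j, 0 < dD j) ->
  (forall j, strictly_convex (J j)) ->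
  (forall j x, derivable (J j) x 1) ->
  (forall j x, derivable (derive1 (J j)) x 1) ->
  let C : 'M[R]_(n, m) := @incidence R n m src tgt in
  let B := diagm b in
  let D := diagm dD in
  is_MP_inverse (C *m B *m C^T) Ldag ->
  let X : 'M[R]_(m, n) := B *m C^T *m Ldag in
  let H : 'M[R]_(n, m + m) := (col_mx X (- X))^T in
  let F : 'cV[R]_(m + m) := col_mx Fup (- Flo) in
  primal_dual_optimal J C B D H F d p q omega theta alpha lam eta nu ->
  [/\ q - d - D *m omega - C *m B *m theta = 0,
      omega = 0,
      reduced_optimal J H F d q
    & forall j, derive1 (J j) (p j 0) = lam - (H *m eta) j 0].
Proof.
move=> hst hinj hconn hb hdD hconv hder hder2 C B D hMP X H F [heta hup hlow].
have dE : forall k (u v : 'cV[R]_k), (u^T *m v) 0 0 = dot u v by [].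
have hr : q - d - D *m omega - C *m B *m theta = 0.
  apply: dot_eq0; have := hup alpha lam eta (nu + (q - d - D *m omega - C *m B *m theta)) heta.
  rewrite /lagrangian !dE dotDl; lra.
have hqp : q = p.
  apply/eqP; rewrite -subr_eq0; apply/eqP.
  apply: dot_eq0; have := hup (alpha + (q - p)) lam eta nu heta.
  rewrite /lagrangian !dE dotDl; lra.
have hs : dot (ones R n) (q - d) = 0.
  have := hup alpha (lam - dot (ones R n) (q - d)) eta nu heta.
  rewrite /lagrangian !dE => h.
  have : dot (ones R n) (q - d) * dot (ones R n) (q - d) <= 0 by lra.
  by rewrite -expr2 => h2; apply/eqP; rewrite -sqrf_eq0 eq_le h2 sqr_ge0.
have hg : forall k, (H^T *m (q - d) - F) k 0 <= 0.
  move=> k; have hv : vle 0 (eta + delta_mx k 0).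
    by move=> i; move: (heta i); rewrite !mxE => h; apply: addr_ge0 => //; rewrite ler0n.
  have := hup alpha lam (eta + delta_mx k 0) nu hv.
  rewrite /lagrangian !dE dotDl dot_delta; lra.
have hcs : dot eta (H^T *m (q - d) - F) = 0.
  have := hup alpha lam 0 nu (fun i => lexx _).
  rewrite /lagrangian !dE dot0l => h1.
  have : dot eta (H^T *m (q - d) - F) <= 0.
    rewrite dotE sumr_le0 // => i _; apply: mulr_ge0_le0 => //.
    by move: (heta i); rewrite mxE.
  lra.
have base : lagrangian J C B D H F d p q omega theta alpha lam eta nu
    = sumJ J p + 2^-1 * (omega^T *m D *m omega) 0 0.
  rewrite /lagrangian /planner_obj !dE hr hs hcs hqp subrr !dot0r; lra.
have BT : B^T = B by rewrite /B /diagm tr_diag_mx.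
have hw : B *m C^T *m nu = 0.
  apply: dot_eq0; have := hlow p q omega (theta + B *m C^T *m nu).
  rewrite base /lagrangian /planner_obj !dE mulmxDr.
  rewrite (_ : dot nu (q - d - D *m omega - (C *m B *m theta + C *m B *m (B *m C^T *m nu)))
     = dot nu (q - d - D *m omega - C *m B *m theta) - dot nu (C *m B *m (B *m C^T *m nu))); last first.
    by rewrite opprD addrA dotBr.
  rewrite hr dot0r dotM trmx_mul BT.
  rewrite hs hcs hqp subrr !dot0r; lra.
have hCt : C^T *m nu = 0.
  move: hw; rewrite -mulmxA; set w0 := C^T *m nu => hw.
  apply/matrixP => e j; rewrite ord1.
  have := congr1 (fun M : 'M[R]_(m,1) => M e 0) hw; rewrite /B /diagm mul_diag_mx !mxE.
  by move=> /eqP; rewrite mulf_eq0 (gt_eqF (hb e)) /= => /eqP.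
have hedge : forall e, nu (src e) 0 = nu (tgt e) 0.
  move=> e; apply/eqP; rewrite -subr_eq0; apply/eqP.
  by rewrite -(inc_col nu (hst e)) -/C hCt mxE.
have hconst : forall i j, nu i 0 = nu j 0.
  move=> i j.
  have hcl : fingraph.closed (fun a b : 'I_n => [exists e, ((src e == a) && (tgt e == b))
                                || ((src e == b) && (tgt e == a))])
                    [pred k | nu k 0 == nu i 0].
    move=> x y /existsP[e /orP[/andP[/eqP <- /eqP <-]|/andP[/eqP <- /eqP <-]]];
      by rewrite !inE hedge.
  have := closed_connect hcl (hconn i j).
  by rewrite !inE eqxx => /esym/eqP ->.
have hnuq : dot nu (q - d) = 0.
  case: (pickP (fun _ : 'I_n => true)) => [i0 _|hn]; last first.
    by rewrite dotE big1 // => i _; have := hn i.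
  rewrite dotE (eq_bigr (fun i => nu i0 0 * (q - d) i 0)); last by move=> i _; rewrite (hconst i i0).
  rewrite -mulr_sumr; move: hs; rewrite dotE (eq_bigr (fun i => (q - d) i 0)).
    by move=> ->; rewrite mulr0.
  by move=> i _; rewrite mxE mul1r.
have qf : forall u : 'cV[R]_n, (u^T *m D *m u) 0 0 = dot u (D *m u).
  by move=> u; rewrite -mulmxA.
have hsym : dot nu (D *m omega) = dot omega (D *m nu) by apply: diag_sym.
have homega : omega = nu.
  apply/eqP; rewrite -subr_eq0; apply/eqP; apply: (diag_quad_eq0 hdD).
  have := hlow p q nu theta; rewrite base /lagrangian /planner_obj !qf !dE.
  rewrite (_ : q - d - D *m nu - C *m B *m theta
     = (q - d - D *m omega - C *m B *m theta) + D *m (omega - nu)); last first.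
    by rewrite mulmxBr; apply/matrixP => i j; rewrite !mxE; ring.
  rewrite dotDr hr dot0r mulmxBr (dotBr (D *m omega)) hsym hs hcs hqp subrr !dot0r => h.
  rewrite !dotBl !dotBr hsym; lra.
have hnu : nu = 0.
  have : dot nu (q - d - D *m omega - C *m B *m theta) = 0 by rewrite hr dot0r.
  rewrite dotBr dotBr hnuq -mulmxA (dotM nu C) hCt dot0l homega => h.
  apply: (diag_quad_eq0 hdD); lra.
subst nu; subst omega.
have halpha : alpha = lam *: ones R n - H *m eta.
  set z := alpha - lam *: ones R n + H *m eta.
  apply/eqP; rewrite -subr_eq0; apply/eqP.
  have -> : alpha - (lam *: ones R n - H *m eta) = z.
    by rewrite /z; apply/matrixP=> i j; rewrite !mxE; ring.
  apply: dot_eq0.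
  have ez : dot z z = dot alpha z - lam * dot (ones R n) z + dot (H *m eta) z.
    by rewrite {1}/z dotDl dotBl dotZl.
  have := hlow p (q - z) 0 theta.
  rewrite base /lagrangian /planner_obj !qf !dE !dot0l.
  rewrite (_ : q - z - p = (q - p) - z); last by rewrite addrAC.
  rewrite (_ : q - z - d = (q - d) - z); last by rewrite addrAC.
  rewrite mulmxBr (_ : H^T *m (q - d) - H^T *m z - F = (H^T *m (q - d) - F) - H^T *m z); last by rewrite addrAC.
  rewrite (dotBr (q - p)) (dotBr (q - d)) (dotBr (H^T *m (q - d) - F)) (dotM eta H^T z) trmxK.
  rewrite hs hcs hqp subrr dot0r; lra.
have hfj : forall j y, J j (p j 0) - alpha j 0 * p j 0 <= J j y - alpha j 0 * y.
  move=> j y; have := hlow (p + (y - p j 0) *: delta_mx j 0) q 0 theta.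
  rewrite base /lagrangian /planner_obj !qf !dE !dot0l sumJ_delta.
  rewrite (_ : p j 0 + (y - p j 0) = y); last by ring.
  rewrite opprD addrA (dotBr (q - p)) dotZr (dotC alpha (delta_mx j 0)) dot_delta.
  rewrite hs hcs hqp subrr dot0r; lra.
split => //.
- split.
    split; first exact: hs.
    move=> k; move: (hg k); rewrite [X in X <= 0]mxE [X in _ + X]mxE; lra.
  move=> q' [hs' hg'].
  have hle : dot eta (H^T *m (q' - d) - F) <= 0.
    rewrite dotE sumr_le0 // => i _; apply: mulr_ge0_le0.
      by move: (heta i); rewrite mxE.
    by move: (hg' i); rewrite [X in _ -> X <= 0]mxE [X in _ + X <= 0]mxE; lra.
  have := hlow q' q' 0 0.
  rewrite base /lagrangian /planner_obj !qf !dE !dot0l subrr dot0r.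
  move: hs'; rewrite dE => hs'; rewrite hs' -hqp; lra.
- move=> j; rewrite (fermat1 (hder j) (hfj j)) halpha !mxE mulr1; done.
Qed.
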